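(* Let $r \geqslant 5$ be a prime and let $\mathcal{H}_r = \{ (q,d) : r =\frac{q^d-1}{q-1},\ q \text{ a prime power},\ d \geqslant 2 \text{ an integer} \}$. Then $|\mathcal{H}_r| < \log_2 r$. *)

(* Defs.v *)
From mathcomp Require Import all_boot.
From Stdlib Require Import Reals.

Definition prime_power (q : nat) : Prop :=
  exists p k : nat, prime p /\ (0 < k)%N /\ q = (p ^ k)%N.

Definition in_Hr (r : nat) (x : nat * nat) : Prop :=
  let: (q, d) := x in
  prime_power q /\ (2 <= d)%N /\ r = ((q ^ d - 1) %/ (q - 1))%N.

Definition log2 (x : R) : R := (ln x / ln 2)%R.

(* Main.v *)
Require Import Defs.
From mathcomp Require Import all_boot.
From Stdlib Require Import Reals.
From mathcomp Require Import zify.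
From Stdlib Require Import Lia Lra.

Lemma expn_pow m n : expn m n = Nat.pow m n.
Proof. elim: n => // n IH; by rewrite expnS IH. Qed.

Lemma pp_ge2 q : prime_power q -> (2 <= q)%N.
Proof.
case=> p [k [pp [k0 ->]]]. rewrite -expn_pow.
have p2 := prime_gt1 pp.
case: k k0 => // k _.
rewrite expnS.
have : (0 < expn p k)%N by rewrite expn_gt0; lia.
nia.
Qed.

Lemma div_sum q d : (2 <= q)%N -> ((q ^ d - 1) %/ (q - 1) = \sum_(i < d) expn q i)%N.
Proof.
move=> q2. rewrite -expn_pow.
have -> : (expn q d - 1 = (expn q d).-1)%N by rewrite subn1.
rewrite predn_exp -subn1 mulKn //; lia.
Qed.

Lemma expmono m n e : (m <= n)%N -> (expn m e <= expn n e)%N.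
Proof. case: e => [|e] h; first by rewrite !expn0. by rewrite leq_exp2r. Qed.

Lemma sum_ge q d : (2 <= q)%N -> (expn 2 d <= (\sum_(i < d) expn q i).+1)%N.
Proof.
move=> q2; elim: d => [|d IH]; first by rewrite big_ord0.
rewrite big_ord_recr /= expnS.
have : (expn 2 d <= expn q d)%N by apply: expmono; lia.
move=> ?; set S := (\sum_(i < d) expn q i) in IH *. lia.
Qed.

Lemma sum_mono q1 q2 d : (q1 <= q2)%N -> (\sum_(i < d) expn q1 i <= \sum_(i < d) expn q2 i)%N.
Proof.
move=> h; apply: leq_sum => i _; exact: expmono.
Qed.

Lemma sum_strict q1 q2 d : (q1 < q2)%N -> (2 <= d)%N ->
  (\sum_(i < d) expn q1 i < \sum_(i < d) expn q2 i)%N.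
Proof.
move=> h; case: d => // d d2.
rewrite !big_ord_recl /=.
under eq_bigr do rewrite /bump /= add1n expnS.
under [X in (_ < _ + X)%N]eq_bigr do rewrite /bump /= add1n expnS.
rewrite -!big_distrr /=.
have m := @sum_mono q1 q2 d (ltnW h).
have : (0 < \sum_(i < d) expn q1 i)%N.
  case: d d2 m => // d _ _; rewrite big_ord_recl expn0; lia.
rewrite !expn0; set S1 := (\sum_(i < d) expn q1 i) in m *; set S2 := (\sum_(i < d) expn q2 i) in m *. move=> hS. have : (q1 * S1 < q2 * S2)%N by apply: (@leq_trans (q2 * S1)); [rewrite ltn_pmul2r | rewrite leq_mul2l m orbT]. lia.
Qed.

Lemma inj_q r q1 q2 d : in_Hr r (q1, d) -> in_Hr r (q2, d) -> q1 = q2.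
Proof.
case=> h1 [d2 e1] [h2 [_ e2]].
rewrite div_sum in e1; last exact: pp_ge2.
rewrite div_sum in e2; last exact: pp_ge2.
case: (ltngtP q1 q2) => // h.
- by have := sum_strict _ _ _ h d2; lia.
- by have := sum_strict _ _ _ h d2; lia.
Qed.

Theorem lemma3p9 (r : nat) (hr : prime r) (hr5 : (5 <= r)%N)
  (s : seq (nat * nat)) (hs : uniq s) (hH : forall x, x \in s -> in_Hr r x) :
  (INR (size s) < log2 (INR r))%R.
Proof.
set t := map snd s.
have ut : uniq t.
  rewrite map_inj_in_uniq // => [[q1 d1]] [q2 d2] /hH h1 /hH h2 /= e.
  subst d2; by rewrite (inj_q _ _ _ _ h1 h2).
set K := trunc_log 2 r.+1.
have sub : {subset t <= iota 2 K.-1}.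
  move=> d /mapP [[q d'] /hH [pq [d2 e]] /= ->].
  rewrite div_sum in e; last exact: pp_ge2.
  have := sum_ge _ d' (pp_ge2 _ pq); rewrite -e => hb.
  have := trunc_log_max (isT : (1 < 2)%N) hb.
  rewrite -/K mem_iota; lia.
have := uniq_leq_size ut sub.
rewrite size_iota size_map => hn.
have hK := trunc_logP (isT : (1 < 2)%N) (isT : (0 < r.+1)%N).
rewrite -/K in hK.
have K2 : (2 <= K)%N by apply: trunc_log_max => //; rewrite (_ : expn 2 2 = 4) //; lia.
have hK2 : (expn 2 (size s).+1 <= expn 2 K)%N by rewrite leq_exp2l //; lia.
have hlt : (expn 2 (size s) < r)%N by rewrite expnS in hK2; lia.
rewrite expn_pow in hlt.
have hR : (INR (Nat.pow 2 (size s)) < INR r)%R by apply: lt_INR; lia.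
rewrite pow_INR /= in hR.
have l2 : (0 < ln 2)%R by rewrite -ln_1; apply: ln_increasing; lra.
have hp : (0 < 2 ^ size s)%R by apply: pow_lt; lra.
have := ln_increasing _ _ hp hR; rewrite ln_pow; last lra.
move=> hl.
rewrite /log2.
apply: (Rmult_lt_reg_r (ln 2)) => //.
rewrite /Rdiv Rmult_assoc Rinv_l; lra.
Qed.
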